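(* Let $m$ be a positive integer and $q(x,y)=x^2-xy+y^2$. If the equation $m=q(x,y)$ has a solution $(x,y)\in\mathbb{Z}^2$, then it has a solution $(x',y')$ with $x',y'$ positive integers. *)

(* Defs.v *)
From Stdlib Require Import ZArith.
Open Scope Z_scope.
Definition q (x y : Z) : Z := x * x - x * y + y * y.

(* Main.v *)
Require Import Defs.
From Stdlib Require Import ZArith Lia.
Open Scope Z_scope.

Theorem mainTheorem7 (m : Z) (hm : 0 < m) :
  (exists x y : Z, m = q x y) ->
  exists x' y' : Z, 0 < x' /\ 0 < y' /\ m = q x' y'.
Proof.
  intros [x [y H]]. unfold q in *.
  destruct (Z.lt_trichotomy x 0) as [hx|[hx|hx]];
  destruct (Z.lt_trichotomy y 0) as [hy|[hy|hy]]; subst.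
  - exists (-x), (-y). split; [lia|split; [lia|ring]].
  - exists (-x), (-x). split; [lia|split; [lia|ring]].
  - exists (y-x), y. split; [lia|split; [lia|ring]].
  - exists (-y), (-y). split; [lia|split; [lia|ring]].
  - lia.
  - exists y, y. split; [lia|split; [lia|ring]].
  - exists (x-y), x. split; [lia|split; [lia|ring]].
  - exists x, x. split; [lia|split; [lia|ring]].
  - exists x, y. split; [lia|split; [lia|ring]].
Qed.
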